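(* Let $L$ be a finite multiset of positive integers. If $L$ admits a special linear realization of type $2$, then for every integer $b\geq 2$ the multiset $L\cup\{2^b\}$ also admits a special linear realization of type $2$.
   Context: For a multiset $L$ of positive integers with $|L|=v-1$, each at most $v-1$, a linear realization of $L$ is a Hamiltonian path $[x_0,x_1,\dots,x_{v-1}]$ of the complete graph on $\{0,1,\dots,v-1\}$ such that the multiset $\{|x_i-x_{i+1}| : i=0,\dots,v-2\}$ equals $L$. A linear realization is special of type $2$ if its two endpoints are $0$ and $1$. $\{2^b\}$ denotes the multiset of $b$ copies of $2$, and $\cup$ is multiset union. *)

(* Defs.v *)
From mathcomp Require Import all_boot.
Set Implicit Arguments. Unset Strict Implicit. Unset Printing Implicit Defensive.

Definition absdiff (a b : nat) : nat := (a - b) + (b - a).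

Definition path_lengths (x : seq nat) : seq nat :=
  match x with
  | [::] => [::]
  | x0 :: s => pairmap absdiff x0 s
  end.

(* x = [x_0,...,x_{v-1}] is a linear realization of L, where v = |L| + 1:
   x is a Hamiltonian path of K_v on {0,...,v-1} (a permutation of 0..v-1)
   and the multiset of its edge lengths equals L. *)
Definition linear_realization (L : seq nat) (x : seq nat) : Prop :=
  perm_eq x (iota 0 (size L).+1) /\ perm_eq (path_lengths x) L.

Definition special2_realization (L : seq nat) (x : seq nat) : Prop :=
  linear_realization L x /\
  ((head 0 x == 0) && (last 0 x == 1) || (head 0 x == 1) && (last 0 x == 0)).

(* Main.v *)
Require Import Defs.
From mathcomp Require Import all_boot.

Lemma absdiff_shift c a b : absdiff (c + a) (c + b) = absdiff a b.
Proof. by rewrite /absdiff !subnDl. Qed.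

Lemma absdiffC a b : absdiff a b = absdiff b a.
Proof. by rewrite /absdiff addnC. Qed.

Lemma pm_shift c a s :
  pairmap absdiff (c + a) (map (addn c) s) = pairmap absdiff a s.
Proof.
elim: s a => [|y s IH] a //=.
by rewrite absdiff_shift IH.
Qed.

Lemma pm_flip a s :
  pairmap (fun y x => absdiff x y) a s = pairmap absdiff a s.
Proof.
elim: s a => [|y s IH] a //=.
by rewrite IH absdiffC.
Qed.

Lemma last_rev_belast (y : nat) s : last (last y s) (rev (belast y s)) = y.
Proof.
have e : last 0 (rev (y :: s)) = y by rewrite rev_cons last_rcons.
by move: e; rewrite [y :: s]lastI rev_rcons.
Qed.

Lemma rev_pm a s :
  pairmap absdiff (last a s) (rev (belast a s)) = rev (pairmap absdiff a s).
Proof.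
elim: s a => [|y s IH] a //=.
rewrite rev_cons -cats1 pairmap_cat IH last_rev_belast rev_cons cats1 /=.
by rewrite absdiffC.
Qed.

Lemma pl_rev x : perm_eq (path_lengths (rev x)) (path_lengths x).
Proof.
case: x => [|a s] //=.
rewrite lastI rev_rcons /=.
have -> : pairmap absdiff (last a s) (rev (belast a s))
   = rev (pairmap absdiff a s) by rewrite rev_pm.
by rewrite perm_rev.
Qed.

Definition P (L : seq nat) :=
  exists s, linear_realization L (0 :: s) /\ last 0 s = 1.

Lemma P_perm L L' : perm_eq L L' -> P L -> P L'.
Proof.
move=> pLL' [s [[h1 h2] h3]]; exists s; split=> //; split.
  by rewrite -(perm_size pLL').
by rewrite (perm_trans h2 pLL').
Qed.

Lemma map_iota c n : map (addn c) (iota 0 n) = iota c n.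
Proof. by rewrite -{2}(addn0 c) iotaDl. Qed.

Lemma step2 L : P L -> P (L ++ [:: 2; 2]).
Proof.
move=> [s [[h1 h2] h3]].
exists (map (addn 2) (0 :: s) ++ [:: 1]); split; last by rewrite last_cat.
split.
  rewrite size_cat /= addn2 /= perm_cons.
  rewrite cats1 -rcons_cons perm_rcons perm_cons.
  change (perm_eq (map (addn 2) (0 :: s)) (iota 2 (size L).+1)).
  by rewrite -map_iota; apply: perm_map; exact: h1.
rewrite /path_lengths pairmap_cat.
have -> : last 0 [seq 2 + i | i <- 0 :: s] = 3.
  by rewrite /= (last_map (addn 2) s 0) h3.
rewrite /= -{2}(addn0 2) pm_shift.
have -> : absdiff 3 1 = 2 by [].
apply/permP => p; rewrite /= !count_cat /= ((permP h2) p).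
have -> : absdiff 0 (2 + 0) = 2 by [].
by rewrite !addn0 addnCA.
Qed.

Lemma step3 L : P L -> P (L ++ [:: 2; 2; 2]).
Proof.
move=> [s [[h1 h2] h3]].
set t := rev (0 :: s).
have ht : t = 1 :: rev (belast 0 s) by rewrite /t lastI h3 rev_rcons.
have hlt : last 0 t = 0 by rewrite /t rev_cons last_rcons.
have h1t : perm_eq t (iota 0 (size L).+1) by rewrite /t perm_rev.
have h2t : perm_eq (path_lengths t) L by rewrite /t (perm_trans (pl_rev _)).
move: h1t h2t hlt; rewrite ht; set r := rev (belast 0 s) => h1t h2t hlt.
exists (2 :: map (addn 3) (1 :: r) ++ [:: 1]); split; last by rewrite /= last_cat.
split.
  rewrite size_cat /= perm_cons.
  have -> : iota 1 (size L + 3) = 1 :: 2 :: iota 3 (size L).+1.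
    by rewrite addn3.
  rewrite cats1 -!rcons_cons perm_rcons perm_cons.
  change (perm_eq (2 :: map (addn 3) (1 :: r)) (2 :: iota 3 (size L).+1)); rewrite perm_cons.
  change (perm_eq (map (addn 3) (1 :: r)) (iota 3 (size L).+1)).
  rewrite -map_iota. move: h1t. exact: (perm_map (addn 3)).
rewrite /path_lengths /= pairmap_cat.
have -> : last (3 + 1) [seq 3 + i | i <- r] = 3.
  by rewrite (last_map (addn 3) r 1); move: hlt => /= ->.
rewrite pm_shift.
apply/permP => p; rewrite /= !count_cat /= ((permP h2t) p).
have -> : absdiff 0 2 = 2 by [].
have -> : absdiff 2 (3 + 1) = 2 by [].
have -> : absdiff 3 1 = 2 by [].
by rewrite !addn0 addnCA [p 2 + (_ + _)]addnCA.
Qed.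

Lemma normalize L x : special2_realization L x -> P L.
Proof.
move=> [[h1 h2] /orP[/andP[/eqP hh /eqP hl]|/andP[/eqP hh /eqP hl]]].
  case: x h1 h2 hh hl => [|a s] h1 h2 hh hl.
    by move: (perm_size h1); rewrite size_iota.
  by simpl in hh; subst a; exists s.
case: x h1 h2 hh hl => [|a s] h1 h2 hh hl.
  by move: (perm_size h1); rewrite size_iota.
simpl in hh; subst a.
move: hl => /= hl.
have : rev (1 :: s) = 0 :: rev (belast 1 s) by rewrite lastI hl rev_rcons.
move=> e; exists (rev (belast 1 s)); split.
  rewrite -e; split; first by rewrite perm_rev.
  exact: perm_trans (pl_rev _) h2.
have : last 0 (rev (1 :: s)) = 1 by rewrite rev_cons last_rcons.
by rewrite e.
Qed.

Theorem lemma2p4 (L : seq nat) :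
  all (fun l => 0 < l) L ->
  (exists x, special2_realization L x) ->
  forall b : nat, 2 <= b ->
    exists y, special2_realization (L ++ nseq b 2) y.
Proof.
move=> _ [x hx] b hb.
have hP := normalize L x hx.
suff : P (L ++ nseq b 2).
  move=> [s [h1 h2]]; exists (0 :: s); split=> //.
  by rewrite /= h2 !eqxx.
elim: b {-2}b (leqnn b) hb => [|n IH] b hbn hb.
  by move: hbn hb; rewrite leqn0 => /eqP ->.
case: b hbn hb => [|[|[|[|k]]]] hbn hb //.
- exact: step2.
- exact: step3.
- have hk : 2 <= k.+2 by [].
  have := step2 _ (IH k.+2 (ltnW (hbn : k.+2 < n)) hk).
  by move=> h; apply: P_perm h; rewrite -catA perm_cat2l perm_catC.
Qed.
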